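(* Assume the law of excluded middle. Then for all $\alpha,\beta\in\mathrm{ord}$ we have $\alpha\le\beta$ or $\beta<\alpha$. Moreover, if $\beta<\alpha$, then there exists $i\in I_\alpha$ such that $\beta\le\alpha_i$.
   Context: Let $\mathfrak F$ be a set of index sets such that: $\mathbb N$ and each $\mathbb N_k=\{n\in\mathbb N:n<k\}$ ($k\ge 0$) belong to $\mathfrak F$; every finitely enumerated subset of an element of $\mathfrak F$ is isomorphic to an element of $\mathfrak F$; for $J\in\mathfrak F$ the set of finitely enumerated subsets of $J$ is isomorphic to an element of $\mathfrak F$; $\mathfrak F$ is stable under disjoint unions indexed by elements of $\mathfrak F$. A finitely enumerated subset of $A$ is one given by a map $\mathbb N_k\to A$; write $F\subseteq_f I$. The set $\mathrm{ord}$ is inductively generated by $\underline 0$ and, for every family $(\alpha_i)_{i\in I}$ with $I\in\mathfrak F$, $\alpha_i\in\mathrm{ord}$, an element $\mathrm S(\alpha_i)_{i\in I}$; for such $\alpha$, $I_\alpha=I$ and $\alpha_i$ are its definitional subordinals; $I_{\underline 0}=\emptyset$. For a finite list $F$ in $I_\alpha$, $\alpha_F$ is the list of the $\alpha_i$, $i\in F$. Relations between an element and a nonempty finite list, by simultaneous induction: $\alpha\le\beta^1,\dots,\beta^m$ means $\alpha_i<\beta^1,\dots,\beta^m$ for all $i\in I_\alpha$; $\alpha<\beta^1,\dots,\beta^m$ means there exist $F_1\subseteq_f I_{\beta^1},\dots,F_m\subseteq_f I_{\beta^m}$, not all empty, with $\alpha\le\beta^1_{F_1},\dots,\beta^m_{F_m}$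 (concatenated list). $\alpha\le\beta$ and $\alpha<\beta$ are the case $m=1$. *)

(* Defs.v *)
From Stdlib Require Import List.
Import ListNotations.

(* The collection of index sets 𝔉 is modelled as a universe:
   codes U with decoding El : U -> Type. *)

Definition iso (A B : Type) : Prop :=
  exists (f : A -> B) (g : B -> A),
    (forall a, g (f a) = a) /\ (forall b, f (g b) = b).

Definition Nk (k : nat) : Type := {n : nat | n < k}.

(* A finitely enumerated subset of A is given by a map N_k -> A, i.e. a list
   of elements of A.  Its underlying subset: *)
Definition fe_subset {A : Type} (F : list A) : Type := {a : A | In a F}.

Record frakF (U : Type) (El : U -> Type) : Prop := {
  frakF_nat : exists u, iso (El u) nat;
  frakF_Nk : forall k, exists u, iso (El u) (Nk k);
  frakF_fesub : forall u (F : list (El u)), exists v, iso (El v) (fe_subset F);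
  frakF_fesets : forall u, exists v, iso (El v) (list (El u));
  frakF_sigma : forall u (v : El u -> U), exists w, iso (El w) {x : El u & El (v x)}
}.

Section Ord.
Variables (U : Type) (El : U -> Type).

Inductive ord : Type :=
| Zero : ord
| Sup : forall u : U, (El u -> ord) -> ord.

Definition idx (a : ord) : Type :=
  match a with Zero => Empty_set | Sup u _ => El u end.

Definition sub (a : ord) : idx a -> ord :=
  match a as a0 return idx a0 -> ord with
  | Zero => fun e => match e with end
  | Sup u f => f
  end.

Definition subs (a : ord) (F : list (idx a)) : list ord := map (sub a) F.

(* A choice of F_1 ⊆_f I_{beta^1}, ..., F_m ⊆_f I_{beta^m} *)
Fixpoint sel (bs : list ord) : Type :=
  match bs with
  | [] => unit
  | b :: bs' => (list (idx b) * sel bs')%type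
  end.

Fixpoint sel_list (bs : list ord) : sel bs -> list ord :=
  match bs as bs0 return sel bs0 -> list ord with
  | [] => fun _ => []
  | b :: bs' => fun F => subs b (fst F) ++ sel_list bs' (snd F)
  end.

Fixpoint sel_all_empty (bs : list ord) : sel bs -> Prop :=
  match bs as bs0 return sel bs0 -> Prop with
  | [] => fun _ => True
  | b :: bs' => fun F => fst F = [] /\ sel_all_empty bs' (snd F)
  end.

(* alpha <= beta^1,...,beta^m  :<->  alpha_i < beta^1,...,beta^m for all i in I_alpha,
   where  x < beta^1,...,beta^m  :<->  exists F_1..F_m not all empty with
   x <= beta^1_{F_1},...,beta^m_{F_m}.  (Simultaneous definition, structural in alpha.) *)
Fixpoint ord_le (a : ord) (bs : list ord) {struct a} : Prop :=
  match a with
  | Zero => True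
  | Sup u f => forall i : El u,
      exists F : sel bs, ~ sel_all_empty bs F /\ ord_le (f i) (sel_list bs F)
  end.

Definition ord_lt (a : ord) (bs : list ord) : Prop :=
  exists F : sel bs, ~ sel_all_empty bs F /\ ord_le a (sel_list bs F).

End Ord.

Arguments Zero {U El}.
Arguments Sup {U El} u _.
Arguments idx {U El} a.
Arguments sub {U El} a _.
Arguments ord_le {U El} a bs.
Arguments ord_lt {U El} a bs.

(* Main.v *)
Require Import Defs.
From Stdlib Require Import List.
Import ListNotations.

Fixpoint lee {U : Type} {El : U -> Type} (a b : ord U El) {struct a} : Prop :=
  match a with
  | Zero => True
  | Sup u f => forall i : El u, exists k : idx b, lee (f i) (sub b k)
  end.

Lemma lee_refl {U El} (a : ord U El) : lee a a.
Proof. induction a as [|u f IH]; simpl; auto. intro i. exists i. apply IH. Qed.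

Lemma lee_sub_step {U El} (y' y : ord U El) :
  lee y' y -> forall m : idx y', exists n : idx y, lee (sub y' m) (sub y n).
Proof. destruct y' as [|w h]; simpl. intros _ m; destruct m. auto. Qed.

Lemma lee_trans {U El} (a : ord U El) : forall b c, lee a b -> lee b c -> lee a c.
Proof.
  induction a as [|u f IH]; simpl; auto.
  intros b c Hab Hbc i. destruct (Hab i) as [k Hk].
  destruct (lee_sub_step b c Hbc k) as [n Hn]. exists n. eapply IH; eauto.
Qed.

Lemma lee_of_sub {U El} (a : ord U El) : forall b i, lee a (sub b i) -> lee a b.
Proof.
  induction a as [|u f IH]; simpl; auto.
  intros b i H j. destruct (H j) as [k Hk]. exists i. eapply IH; eauto.
Qed.

Lemma lee_total0 {U El} (lem : forall P : Prop, P \/ ~ P) (a : ord U El) :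
  forall b, lee a b \/ exists i, lee b (sub a i).
Proof.
  induction a as [|u f IH]; simpl; auto.
  intro b.
  destruct (lem (exists i, ~ exists k, lee (f i) (sub b k))) as [[i Hi]|Hn].
  - right. exists i. destruct b as [|v g]; simpl; auto.
    intro k. destruct (IH i (g k)) as [H|H]; auto.
    exfalso; apply Hi; exists k; exact H.
  - left. intro i. destruct (lem (exists k, lee (f i) (sub b k))) as [H|H]; auto.
    exfalso; apply Hn; exists i; exact H.
Qed.

Lemma lee_total {U El} (lem : forall P : Prop, P \/ ~ P) (a b : ord U El) :
  lee a b \/ lee b a.
Proof.
  destruct (lee_total0 lem a b) as [H|[i H]]; auto. right. eapply lee_of_sub; eauto.
Qed.

Lemma list_max {U El} (lem : forall P : Prop, P \/ ~ P) (S : list (ord U El)) :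
  forall d, exists y, (y = d \/ In y S) /\ forall z, (z = d \/ In z S) -> lee z y.
Proof.
  induction S as [|s S IH]; intro d.
  - exists d. split; auto. intros z [->|[]]. apply lee_refl.
  - destruct (lee_total lem d s) as [H|H].
    + destruct (IH s) as [y [Hy1 Hy2]]. exists y. split.
      * simpl. destruct Hy1; auto.
      * intros z [->|[->|Hz]]. eapply lee_trans; eauto. all: auto.
    + destruct (IH d) as [y [Hy1 Hy2]]. exists y. split.
      * simpl. destruct Hy1; auto.
      * intros z [->|[->|Hz]]; auto. eapply lee_trans; eauto.
Qed.

Lemma cover {U El} (lem : forall P : Prop, P \/ ~ P) (a : ord U El) S y0 :
  In y0 S ->
  (forall j : idx a, exists y, In y S /\ exists m, lee (sub a j) (sub y m)) ->
  exists y, In y S /\ lee a y.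
Proof.
  intros Hy0 H.
  destruct (list_max lem S y0) as [y [Hy1 Hy2]].
  exists y. split. destruct Hy1 as [->|?]; auto.
  destruct a as [|u f]; simpl; auto.
  intro j. destruct (H j) as [y' [Hy' [m Hm]]].
  destruct (lee_sub_step y' y (Hy2 y' (or_intror Hy')) m) as [n Hn].
  exists n. eapply lee_trans; eauto.
Qed.

Fixpoint emptysel {U El} (L : list (ord U El)) : sel U El L :=
  match L as L0 return sel U El L0 with
  | [] => tt
  | b :: L' => ([], emptysel L')
  end.

Lemma emptysel_list {U El} (L : list (ord U El)) : sel_list U El L (emptysel L) = [].
Proof. induction L; simpl; auto. Qed.

Lemma sel_single {U El} (L : list (ord U El)) x (k : idx x) :
  In x L -> exists F : sel U El L, ~ sel_all_empty U El L F /\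
    forall z, In z (sel_list U El L F) <-> z = sub x k.
Proof.
  induction L as [|b L IH]; simpl. intros [].
  intros [Hb|Hx].
  - subst b. exists ([k], emptysel L). simpl. split.
    + intros [H _]; discriminate.
    + intro z. rewrite emptysel_list. unfold subs; simpl. split.
      * intros [->|[]]; auto.
      * intros ->; auto.
  - destruct (IH Hx) as [F [HF1 HF2]]. exists ([], F). simpl. split.
    + intros [_ H]; auto.
    + exact HF2.
Qed.

Lemma sel_in {U El} (L : list (ord U El)) (F : sel U El L) y :
  In y (sel_list U El L F) -> exists x, In x L /\ exists k, y = sub x k.
Proof.
  induction L as [|b L IH]; simpl. intros [].
  destruct F as [F1 F2]; simpl. intro H. apply in_app_or in H. destruct H as [H|H].
  - unfold subs in H. apply in_map_iff in H. destruct H as [k [Hk _]].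
    exists b. split; auto. exists k; auto.
  - destruct (IH F2 H) as [x [Hx Hk]]. exists x; auto.
Qed.

Lemma sel_nonempty {U El} (L : list (ord U El)) (F : sel U El L) :
  ~ sel_all_empty U El L F -> exists y, In y (sel_list U El L F).
Proof.
  induction L as [|b L IH]; simpl. intro H; exfalso; auto.
  destruct F as [F1 F2]; simpl. intro H. destruct F1 as [|k F1].
  - destruct (IH F2) as [y Hy]. intro H'; apply H; auto.
    exists y. apply in_or_app; auto.
  - exists (sub b k). simpl; auto.
Qed.

Lemma charC {U El} (lem : forall P : Prop, P \/ ~ P) (a : ord U El) :
  forall L, ord_le a L <-> forall i : idx a, exists x, In x L /\ exists k, lee (sub a i) (sub x k).
Proof.
  induction a as [|u f IH]; simpl. intro L; split; auto. intros _ [].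
  intro L. split.
  - intros H i. destruct (H i) as [F [HF1 HF2]].
    pose proof (proj1 (IH i (sel_list U El L F)) HF2) as HF3. destruct (sel_nonempty L F HF1) as [y0 Hy0].
    destruct (cover lem (f i) _ y0 Hy0 HF3) as [y [Hy Hle]].
    destruct (sel_in L F y Hy) as [x [Hx [k ->]]]. exists x; split; eauto.
  - intros H i. destruct (H i) as [x [Hx [k Hk]]].
    destruct (sel_single L x k Hx) as [F [HF1 HF2]]. exists F. split; auto.
    apply (proj2 (IH i _)). intro j. exists (sub x k). split. apply HF2; auto.
    apply lee_sub_step; auto.
Qed.

Lemma le1 {U El} (lem : forall P : Prop, P \/ ~ P) (a b : ord U El) :
  ord_le a [b] <-> lee a b.
Proof.
  rewrite (charC lem). destruct a as [|u f]; simpl. split; auto. intros _ [].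
  split.
  - intros H i. destruct (H i) as [x [[<-|[]] Hk]]. exact Hk.
  - intros H i. exists b. split; simpl; auto.
Qed.

Lemma lt1 {U El} (lem : forall P : Prop, P \/ ~ P) (a b : ord U El) :
  ord_lt b [a] <-> exists i, lee b (sub a i).
Proof.
  unfold ord_lt. split.
  - intros [F [HF1 HF2]]. rewrite (charC lem) in HF2.
    destruct (sel_nonempty _ F HF1) as [y0 Hy0].
    destruct (cover lem b _ y0 Hy0 HF2) as [y [Hy Hle]].
    destruct (sel_in _ F y Hy) as [x [[<-|[]] [k ->]]]. exists k; auto.
  - intros [i Hi]. destruct (sel_single [a] a i (or_introl eq_refl)) as [F [HF1 HF2]].
    exists F. split; auto. apply (charC lem). intro j. exists (sub a i).
    split. apply HF2; auto. apply lee_sub_step; auto.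
Qed.

Theorem proposition3p19 (U : Type) (El : U -> Type) (HF : frakF U El) :
  (forall P : Prop, P \/ ~ P) ->
  forall alpha beta : ord U El,
    (ord_le alpha [beta] \/ ord_lt beta [alpha]) /\
    (ord_lt beta [alpha] -> exists i : idx alpha, ord_le beta [sub alpha i]).
Proof.
  intros lem alpha beta. rewrite (le1 lem), (lt1 lem). split.
  - apply lee_total0; auto.
  - intros [i Hi]. exists i. apply (le1 lem). auto.
Qed.
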